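(* The following structures have oligomorphic approximation: (i) every countable homogeneous oligomorphic structure $\mathbb{A}$ for which there is a family $\mathscr{B}$ of finite substructures of $\mathbb{A}$ such that every finite substructure of $\mathbb{A}$ is a substructure of some member of $\mathscr{B}$ and every member of $\mathscr{B}$ is homogeneous; (ii) the equality atoms; (iii) the vector atoms over any finite field $\mathsf{k}$; (iv) the Rado atoms.
   Context: A structure is a set with interpretations of relation symbols of a vocabulary; embeddings preserve and reflect relations and are injective; a substructure is the restriction to a subset. A structure $\mathbb{A}$ is homogeneous if every isomorphism between finite substructures of $\mathbb{A}$ extends to an automorphism of $\mathbb{A}$; oligomorphic if $\operatorname{Aut}(\mathbb{A})$ has finitely many orbits on $\mathbb{A}^d$ for every $d\ge1$. A homogeneous structure $\mathbb{A}$ has oligomorphic approximation if for every $d\ge1$ there is a family $\mathscr{B}$ of finite substructures of $\mathbb{A}$ such that (1) every finite substructure of $\mathbb{A}$ is a substructure of some $\mathbb{B}\in\mathscr{B}$, and (2) there is a finite bound, uniform over $\mathbb{B}\in\mathscr{B}$, on the number of orbits of $\operatorname{Aut}(\mathbb{B})$ on $\mathbb{B}^d$. Equality atoms: $\mathbb{N}$ with no relations besides equality. Vector atoms over a finite field $\mathsf{k}$: the countably-infinite-dimensional $\mathsf{k}$-vector space, with, for every $d$ and $\lambda_1,\dots,\lambda_d\in\mathsf{k}$, the $d$-ary relation $\lambda_1a_1+\dots+\lambda_da_d=0$ (so automorphisms are the linear bijections). Rado atoms: the Rado graph (the Fraïssé limit of all finite undirected graphs, i.e. the unique countable homogeneous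 graph into which every finite graph embeds), over a single symmetric irreflexive binary edge relation. *)

(* Defs.v *)
From Stdlib Require Import List.
From mathcomp Require Import all_boot all_order all_algebra.
Set Implicit Arguments. Unset Strict Implicit. Unset Printing Implicit Defensive.
Import GRing.Theory.

Record signature := Signature { sym : Type ; arity : sym -> nat }.

Record structure (L : signature) := Structure {
  carrier :> Type ;
  rel : forall s : sym L, ('I_(arity s) -> carrier) -> Prop }.
Arguments Structure {L} carrier rel.
Arguments rel {L} _ s _.

Definition is_embedding L (A B : structure L) (f : A -> B) : Prop :=
  injective f /\
  forall (s : sym L) (t : 'I_(arity s) -> A), rel A s t <-> rel B s (fun i => f (t i)).

Definition is_isomorphism L (A B : structure L) (f : A -> B) : Prop :=
  is_embedding f /\ bijective f.

Definition is_automorphism L (A : structure L) (g : A -> A) : Prop :=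
  is_isomorphism g.

Definition induced L (A : structure L) (P : A -> Prop) : structure L :=
  Structure {x : A | P x} (fun s t => rel A s (fun i => proj1_sig (t i))).
Arguments induced {L} A P.

Definition finite_subset (T : Type) (P : T -> Prop) : Prop :=
  exists s : list T, forall x, P x -> In x s.

Definition included (T : Type) (P Q : T -> Prop) : Prop := forall x, P x -> Q x.

(* countable = at most countable *)
Definition countable (T : Type) : Prop := exists f : T -> nat, injective f.

Definition homogeneous L (A : structure L) : Prop :=
  forall P Q : A -> Prop, finite_subset P -> finite_subset Q ->
  forall f : induced A P -> induced A Q, is_isomorphism f ->
  exists g : A -> A, is_automorphism g /\
    forall x : induced A P, g (proj1_sig x) = proj1_sig (f x).

Definition orbits_at_most L (A : structure L) (d N : nat) : Prop :=
  exists reps : list ('I_d -> A), (length reps <= N)%N /\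
    forall x : 'I_d -> A, exists r, In r reps /\
      exists g : A -> A, is_automorphism g /\ forall i, x i = g (r i).
Arguments orbits_at_most {L} A d N.

Definition oligomorphic L (A : structure L) : Prop :=
  forall d : nat, (1 <= d)%N -> exists N, orbits_at_most A d N.

Definition has_oligomorphic_approximation L (A : structure L) : Prop :=
  forall d : nat, (1 <= d)%N ->
  exists Bfam : (A -> Prop) -> Prop,
    (forall B, Bfam B -> finite_subset B) /\
    (forall C, finite_subset C -> exists B, Bfam B /\ included C B) /\
    exists N, forall B, Bfam B -> orbits_at_most (induced A B) d N.

Definition eq_sig : signature := @Signature Empty_set (fun _ => 0%N).
Definition equality_atoms : structure eq_sig :=
  @Structure eq_sig (nat : Type)
    (fun s : sym eq_sig => Empty_set_rect (fun s : Empty_set => ('I_(@arity eq_sig s) -> nat) -> Prop) s).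

(* Vector atoms over a finite field F: the countably-infinite-dimensional
   F-vector space (modelled as {poly F}, basis 'X^i), with a d-ary relation
   lambda_1 a_1 + ... + lambda_d a_d = 0 for every d and lambda in F^d. *)
Definition vec_sig (F : finFieldType) : signature :=
  @Signature {d : nat & 'I_d -> F} (fun s => projT1 s).
Definition vector_atoms (F : finFieldType) : structure (vec_sig F) :=
  @Structure (vec_sig F) ({poly F} : Type)
    (fun (s : {d : nat & 'I_d -> F}) (t : 'I_(projT1 s) -> {poly F}) => (\sum_(i < projT1 s) projT2 s i *: t i = 0)%R).

Definition graph_sig : signature := @Signature unit (fun _ => 2%N).
Definition graph_structure (V : Type) (E : V -> V -> Prop) : structure graph_sig :=
  @Structure graph_sig V (fun _ (t : 'I_2 -> V) => E (t (@ord0 1)) (t (@ord_max 1))).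

Definition is_rado_graph (V : Type) (E : V -> V -> Prop) : Prop :=
  (forall x y, E x y -> E y x) /\ (forall x, ~ E x x) /\
  countable V /\ homogeneous (graph_structure E) /\
  forall (n : nat) (e : 'I_n -> 'I_n -> Prop),
    (forall x y, e x y -> e y x) -> (forall x, ~ e x x) ->
    exists f : 'I_n -> V, is_embedding (A := graph_structure e) (B := graph_structure E) f.

(* Main.v *)
Require Import Defs.
From Stdlib Require Import List ClassicalEpsilon ProofIrrelevance FunctionalExtensionality Classical.
From mathcomp Require Import all_boot all_order all_algebra.
Set Implicit Arguments. Unset Strict Implicit. Unset Printing Implicit Defensive.
Import GRing.Theory.

Lemma InP (T : eqType) (x : T) (s : seq T) : reflect (In x s) (x \in s).
Proof.
elim: s => [|y s IH] /=; first by constructor.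
rewrite in_cons; apply: (iffP orP) => [[/eqP->|/IH]|[->|/IH]]; auto.
Qed.

Lemma length_size (T : Type) (s : seq T) : length s = size s.
Proof. by elim: s => //= x s ->. Qed.

Lemma In_seqmap (T U : Type) (f : T -> U) (s : seq T) x : In x s -> In (f x) (seq.map f s).
Proof. elim: s => //= y s IH [->|H]; [by left|by right; apply: IH]. Qed.

Lemma orbits_move L (B : structure L) d (T : finType) (rep : T -> ('I_d -> B)) :
  (forall x : 'I_d -> B, exists t g, is_automorphism g /\ forall i, x i = g (rep t i)) ->
  orbits_at_most B d #|T|.
Proof.
move=> H; exists (seq.map rep (enum T)); split.
  by rewrite length_size size_map -cardE.
move=> x; have [t [g [Hg Hx]]] := H x; exists (rep t); split; last by exists g.
by apply: In_seqmap; apply/InP; rewrite mem_enum.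
Qed.
Close Scope ring_scope.

Lemma sig_eq (T : Type) (P : T -> Prop) (a b : {x | P x}) : proj1_sig a = proj1_sig b -> a = b.
Proof. case: a b => [x px] [y py] /= E; subst y; f_equal; apply: proof_irrelevance. Qed.

Lemma homog_tuple L (B : structure L) d (x y : 'I_d -> B) :
  homogeneous B ->
  (forall i j, x i = x j <-> y i = y j) ->
  (forall s (c : 'I_(arity s) -> 'I_d), Defs.rel B s (fun k => x (c k)) <-> Defs.rel B s (fun k => y (c k))) ->
  exists g, is_automorphism g /\ forall i, x i = g (y i).
Proof.
move=> hB H1 H2.
pose P := fun b => exists i, b = y i.
pose Q := fun b => exists i, b = x i.
have fP : finite_subset P.
  exists (seq.map y (enum 'I_d)) => b [i ->]; apply: In_seqmap; apply/InP; by rewrite mem_enum.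
have fQ : finite_subset Q.
  exists (seq.map x (enum 'I_d)) => b [i ->]; apply: In_seqmap; apply/InP; by rewrite mem_enum.
pose ip (b : induced B P) := proj1_sig (constructive_indefinite_description _ (proj2_sig b)).
have ipE : forall b, proj1_sig b = y (ip b).
  by move=> b; rewrite /ip; case: constructive_indefinite_description.
pose iq (b : induced B Q) := proj1_sig (constructive_indefinite_description _ (proj2_sig b)).
have iqE : forall b, proj1_sig b = x (iq b).
  by move=> b; rewrite /iq; case: constructive_indefinite_description.
pose f (b : induced B P) : induced B Q := exist Q (x (ip b)) (ex_intro _ (ip b) erefl).
pose h (b : induced B Q) : induced B P := exist P (y (iq b)) (ex_intro _ (iq b) erefl).
have fE : forall b i, proj1_sig b = y i -> proj1_sig (f b) = x i.
  move=> b i E /=; apply/H1; by rewrite -ipE.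
have hE : forall b i, proj1_sig b = x i -> proj1_sig (h b) = y i.
  move=> b i E /=; apply/H1; by rewrite -iqE.
have K1 : cancel f h by move=> b; apply: sig_eq; rewrite (hE _ (ip b)) -?ipE.
have K2 : cancel h f by move=> b; apply: sig_eq; rewrite (fE _ (iq b)) -?iqE.
have isof : is_isomorphism f.
  split; last by exists h.
  split; first exact: can_inj K1.
  move=> s t /=.
  have -> : (fun i => proj1_sig (t i)) = (fun i => y (ip (t i))).
    by apply: functional_extensionality_dep => i; rewrite -ipE.
  exact: iff_sym (H2 s (fun k => ip (t k))).
have [g [Hg Hgf]] := hB P Q fP fQ f isof.
exists g; split => // i.
have := Hgf (exist P (y i) (ex_intro _ i erefl)) => /= ->.
by symmetry; apply: fE.
Qed.

Lemma orbits_rel L (B : structure L) d N (R : ('I_d -> B) -> nat -> Prop) :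
  (forall x, exists j, (j < N)%N /\ R x j) ->
  (forall x y j, R x j -> R y j -> exists g, is_automorphism g /\ forall i, x i = g (y i)) ->
  orbits_at_most B d N.
Proof.
move=> Htot Hsame.
case: (classic (exists x0 : 'I_d -> B, True)) => [[x0 _]|nox].
  pose rep (t : 'I_N) := epsilon (inhabits x0) (fun x => R x t).
  rewrite -[N]card_ord; apply: (orbits_move (rep := rep)) => x.
  have [j [jN Rj]] := Htot x.
  have Rr : R (rep (Ordinal jN)) j.
    by apply: (epsilon_spec (inhabits x0) (fun x => R x j)); exists x.
  have [g [Hg Hx]] := Hsame _ _ _ Rj Rr.
  by exists (Ordinal jN), g.
exists nil; split => // x; exfalso; apply: nox; by exists x.
Qed.
Close Scope ring_scope.
Open Scope ring_scope.

Section Vec.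
Variables (F : finFieldType) (n : nat).
Definition Pn : {poly F} -> Prop := fun p => (size p <= n)%N.
Definition VB := induced (vector_atoms F) Pn.

Definition vmap (G : 'M[F]_n) (x : VB) : VB :=
  exist Pn (rVpoly (poly_rV (proj1_sig x) *m G)) (size_poly _ _).

Lemma vmap_val G x : proj1_sig (vmap G x) = rVpoly (poly_rV (proj1_sig x) *m G).
Proof. by []. Qed.

Lemma vmapK G H x : G *m H = 1%:M -> vmap H (vmap G x) = x.
Proof.
move=> GH; apply: val_inj => /=.
by rewrite rVpolyK -mulmxA GH mulmx1 poly_rV_K //; case: x.
Qed.

Lemma vmap_aut G : G \in unitmx -> is_automorphism (vmap G).
Proof.
move=> uG; have K1 : cancel (vmap G) (vmap (invmx G)) by move=> x; apply: vmapK; rewrite mulmxV.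
have K2 : cancel (vmap (invmx G)) (vmap G) by move=> x; apply: vmapK; rewrite mulVmx.
split; last by exists (vmap (invmx G)).
split; first exact: can_inj K1.
move=> s t /=.
have Et : forall i, proj1_sig (t i) = rVpoly (poly_rV (proj1_sig (t i)) : 'rV[F]_n).
  by move=> i; rewrite poly_rV_K //; case: (t i).
set U := fun i => poly_rV (proj1_sig (t i)) : 'rV[F]_n.
have -> : \sum_(i < projT1 s) projT2 s i *: proj1_sig (t i)
          = rVpoly (\sum_(i < projT1 s) projT2 s i *: U i).
  rewrite linear_sum; apply: eq_bigr => i _; by rewrite linearZ /= -Et.
have -> : \sum_(i < projT1 s) projT2 s i *: proj1_sig (vmap G (t i))
          = rVpoly ((\sum_(i < projT1 s) projT2 s i *: U i) *m G).
  rewrite mulmx_suml linear_sum; apply: eq_bigr => i _.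
  by rewrite vmap_val -scalemxAl linearZ.
have rV0 : forall w : 'rV[F]_n, rVpoly w = 0 <-> w = 0.
  move=> w; split => [H|->]; last by rewrite linear0.
  by rewrite -(rVpolyK w) H linear0.
rewrite !rV0; split => [->|H]; first by rewrite mul0mx.
by rewrite -(mulmxK uG (\sum_i _)) H mul0mx.
Qed.
End Vec.

Lemma ebase_shape (K : fieldType) d k (A : 'M[K]_(d, d + k)) :
  A *m invmx (row_ebase A) = row_mx (lsubmx (A *m invmx (row_ebase A))) 0.
Proof.
rewrite -[LHS]hsubmxK; congr row_mx.
rewrite -{1}(mulmx_ebase A) mulmxK ?row_ebase_unit // -mulmx_rsub.
have -> : rsubmx (pid_mx (\rank A) : 'M[K]_(d, d + k)) = 0.
  apply/matrixP => i j; rewrite !mxE /=.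
  have : (i < d + j)%N by rewrite (leq_trans (ltn_ord i)) // leq_addr.
  by rewrite ltn_neqAle => /andP [/negbTE ->].
by rewrite mulmx0.
Qed.

Theorem part3 (F : finFieldType) : has_oligomorphic_approximation (vector_atoms F).
Proof.
move=> d _.
exists (fun B => exists k, B = @Pn F (d + k)); split; [|split].
- move=> B [k ->]; exists (seq.map (@rVpoly F (d + k)) (enum 'rV[F]_(d + k))).
  move=> x Hx; rewrite -(poly_rV_K Hx); apply: In_seqmap; apply/InP; by rewrite mem_enum.
- move=> C [s Hs]; exists (@Pn F (d + \max_(p <- s) size p)); split; first by exists (\max_(p <- s) size p).
  move=> x /Hs /InP Hx; rewrite /Pn (leq_trans _ (leq_addl _ _)) //.
  exact: (@leq_bigmax_seq _ s xpredT (fun p : {poly F} => size p)).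
- exists #|{: 'M[F]_(d, d)}| => B [k ->].
  pose rep (X : 'M[F]_(d, d)) (i : 'I_d) : @VB F (d + k) :=
    exist (@Pn F (d + k)) (rVpoly (row i (row_mx X (0 : 'M[F]_(d, k))))) (size_poly _ _).
  apply: (orbits_move (rep := rep)) => x.
  pose A : 'M[F]_(d, d + k) := \matrix_(i < d) (poly_rV (proj1_sig (x i)) : 'rV_(d + k)).
  exists (lsubmx (A *m invmx (row_ebase A))), (vmap (row_ebase A)); split.
    by apply: vmap_aut; apply: row_ebase_unit.
  move=> i; apply: val_inj => /=.
  rewrite rVpolyK -ebase_shape -row_mul mulmxKV ?row_ebase_unit // rowK poly_rV_K //.
  by case: (x i).
Qed.
Close Scope ring_scope.

Section Eq.
Variable n : nat.
Definition EP : nat -> Prop := fun x => (x < n)%N.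
Definition EB := induced equality_atoms EP.

Lemma eq_aut (g h : EB -> EB) : cancel g h -> cancel h g -> is_automorphism g.
Proof. move=> K1 K2; split; last by exists h. by split; [exact: can_inj K1| case]. Qed.

Variable L' : seq nat.
Hypothesis pL : perm_eq L' (iota 0 n).
Lemma uL : uniq L'. Proof. by rewrite (perm_uniq pL) iota_uniq. Qed.
Lemma memL y : (y \in L') = (y < n)%N. Proof. by rewrite (perm_mem pL) mem_iota. Qed.
Lemma szL : size L' = n. Proof. by rewrite (perm_size pL) size_iota. Qed.

Definition gmap (x : EB) : EB.
refine (exist EP (nth 0 L' (proj1_sig x)) _).
abstract (by case: x => y Hy; rewrite /EP -memL mem_nth // szL).
Defined.
Definition hmap (x : EB) : EB.
refine (exist EP (index (proj1_sig x) L') _).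
abstract (by case: x => y Hy; rewrite /EP /= -szL index_mem memL).
Defined.
Lemma gmap_aut : is_automorphism gmap.
Proof.
apply: (@eq_aut gmap hmap) => -[x Hx]; apply: val_inj => /=.
  by rewrite index_uniq ?uL // szL.
by rewrite nth_index // memL.
Qed.
End Eq.

Theorem part2 : has_oligomorphic_approximation equality_atoms.
Proof.
move=> d _.
exists (fun B => exists k, B = EP (d + k)); split; [|split].
- move=> B [k ->]; exists (iota 0 (d + k)) => x Hx; apply/InP; by rewrite mem_iota.
- move=> C [s Hs]; exists (EP (d + (\max_(p <- s) p).+1)); split; first by exists (\max_(p <- s) p).+1.
  move=> x /Hs /InP Hx; rewrite /EP addnS ltnS (leq_trans _ (leq_addl _ _)) //.
  exact: (@leq_bigmax_seq _ s xpredT (fun p : nat => p)).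
- exists #|{: {ffun 'I_d -> 'I_d}}| => B [k ->].
  have rp : forall (t : {ffun 'I_d -> 'I_d}) i, EP (d + k) (t i).
    by move=> t i; rewrite /EP (leq_trans (ltn_ord _)) // leq_addr.
  pose rep (t : {ffun 'I_d -> 'I_d}) (i : 'I_d) : EB (d + k) := exist _ _ (rp t i).
  apply: (orbits_move (rep := rep)) => x.
  pose L := undup [seq proj1_sig (x i) | i <- enum 'I_d].
  pose L' := L ++ [seq y <- iota 0 (d + k) | y \notin L].
  have uL : uniq L by rewrite undup_uniq.
  have pL : perm_eq L' (iota 0 (d + k)).
    apply: uniq_perm; first by rewrite cat_uniq uL filter_uniq ?iota_uniq //= andbT;
      apply/hasPn => y; rewrite mem_filter => /andP [].
      exact: iota_uniq.
    move=> y; rewrite mem_cat mem_filter mem_iota add0n.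
    case Hy: (y \in L); last by rewrite andbC.
    move: Hy; rewrite mem_undup => /mapP [i _ ->] /=; by case: (x i).
  have sL : (size L <= d)%N.
    by rewrite (leq_trans (size_undup _)) // size_map size_enum_ord.
  have xL : forall i, proj1_sig (x i) \in L.
    by move=> i; rewrite mem_undup; apply/mapP; exists i; rewrite ?mem_enum.
  have tp : forall i, (index (proj1_sig (x i)) L' < d)%N.
    by move=> i; rewrite index_cat xL (leq_trans _ sL) // index_mem.
  exists [ffun i => Ordinal (tp i)], (gmap pL); split; first exact: gmap_aut.
  move=> i; apply: val_inj => /=; rewrite ffunE /= nth_index //.
  by rewrite mem_cat xL.
Qed.
Close Scope ring_scope.

Theorem part1 : forall (L : signature) (A : structure L),
     countable A -> homogeneous A -> oligomorphic A ->
     (exists Bfam : (A -> Prop) -> Prop,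
        (forall B, Bfam B -> finite_subset B) /\
        (forall C, finite_subset C -> exists B, Bfam B /\ included C B) /\
        (forall B, Bfam B -> homogeneous (induced A B))) ->
     has_oligomorphic_approximation A.
Proof.
move=> L A _ _ olig [Bfam [Hfin [Hcov Hhom]]] d d1.
exists Bfam; split => //; split => //.
have [N [reps [lenN Hreps]]] := olig d d1.
exists N => B BB.
pose R (x : 'I_d -> induced A B) j := exists r, nth_error reps j = Some r /\
  exists g, is_automorphism g /\ forall i, proj1_sig (x i) = g (r i).
apply: (orbits_rel (R := R)).
  move=> x; have [r [Ir [g [Hg Hx]]]] := Hreps (fun i => proj1_sig (x i)).
  have [j Hj] := In_nth_error _ _ Ir.
  exists j; split; last by exists r; split => //; exists g.
  apply: (leq_trans _ lenN); apply/ltP.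
  by apply/nth_error_Some; rewrite Hj.
move=> x y j [r [Er [g [Hg Hx]]]] [r' [Er' [h [Hh Hy]]]].
move: Er'; rewrite Er => -[E]; subst r'.
apply: homog_tuple; first exact: Hhom.
  move=> i k; have [[ig _] _] := Hg; have [[ih _] _] := Hh.
  split => E.
    apply: sig_eq; rewrite !Hy; congr h; apply: ig; rewrite -!Hx; by rewrite E.
  apply: sig_eq; rewrite !Hx; congr g; apply: ih; rewrite -!Hy; by rewrite E.
move=> s c /=; have [[_ rg] _] := Hg; have [[_ rh] _] := Hh.
have -> : (fun k => proj1_sig (x (c k))) = (fun k => g (r (c k))).
  by apply: functional_extensionality_dep => k; rewrite Hx.
have -> : (fun k => proj1_sig (y (c k))) = (fun k => h (r (c k))).
  by apply: functional_extensionality_dep => k; rewrite Hy.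
by rewrite -rg -rh.
Qed.
Close Scope ring_scope.

Lemma emb_comp L (A B C : structure L) (f : A -> B) (g : B -> C) :
  is_embedding f -> is_embedding g -> is_embedding (fun a => g (f a)).
Proof.
move=> [fi fr] [gi gr]; split; first by move=> x y /gi /fi.
move=> s t; rewrite (fr s t); exact: (gr s (fun i => f (t i))).
Qed.

Lemma aut_inv L (A : structure L) (g h : A -> A) :
  is_automorphism g -> cancel g h -> cancel h g -> is_automorphism h.
Proof.
move=> [[gi gr] _] K1 K2; split; last by exists g.
split; first exact: can_inj K2.
move=> s t; rewrite (gr s (fun i => h (t i))).
have -> : (fun i => g (h (t i))) = t by apply: functional_extensionality_dep => i; rewrite K2.
by [].
Qed.

Section Transport.
Variables (L : signature) (S Vs : structure L) (f : S -> Vs).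
Hypothesis femb : is_embedding f.
Definition Img : Vs -> Prop := fun v => exists a, v = f a.
Definition pre (b : induced Vs Img) : S := proj1_sig (constructive_indefinite_description _ (proj2_sig b)).
Lemma preE b : proj1_sig b = f (pre b).
Proof. by rewrite /pre; case: constructive_indefinite_description. Qed.
Lemma preE2 b a : proj1_sig b = f a -> pre b = a.
Proof. move=> E; case: femb => fi _; apply: fi; by rewrite -preE. Qed.
Definition tr (s : S -> S) (b : induced Vs Img) : induced Vs Img :=
  exist Img (f (s (pre b))) (ex_intro _ _ erefl).
Lemma trE s b a : proj1_sig b = f a -> proj1_sig (tr s b) = f (s a).
Proof. by move=> /preE2 /= ->. Qed.
Definition inimg (a : S) : induced Vs Img := exist Img (f a) (ex_intro _ _ erefl).

Lemma tr_aut s : is_automorphism s -> is_automorphism (tr s).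
Proof.
move=> Hs; have [[si sr] [s' K1 K2]] := Hs.
have C1 : cancel (tr s) (tr s').
  move=> b; apply: sig_eq.
  have E1 := @trE s b (pre b) (preE b).
  by rewrite (@trE s' (tr s b) (s (pre b)) E1) K1 -preE.
have C2 : cancel (tr s') (tr s).
  move=> b; apply: sig_eq.
  have E1 := @trE s' b (pre b) (preE b).
  by rewrite (@trE s (tr s' b) (s' (pre b)) E1) K2 -preE.
split; last by exists (tr s').
split; first exact: can_inj C1.
move=> sy t /=; case: femb => _ fr.
have -> : (fun i => proj1_sig (t i)) = (fun i => f (pre (t i))).
  by apply: functional_extensionality_dep => i; rewrite -preE.
rewrite -fr (sr sy) fr //.
Qed.
End Transport.
Close Scope ring_scope.
Open Scope ring_scope.

Section Symp.
Variables d t : nat.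
Local Notation n := (d + (d + t))%N.
Local Notation K := 'F_2.
Definition dot (u v : 'rV[K]_n) : K := (u *m v^T) 0 0.
Definition Vt : finType := ('rV[K]_n * 'rV[K]_n)%type.
Definition adj (a b : Vt) : Prop := dot a.1 b.2 + dot b.1 a.2 = 1.
Definition Sym := graph_structure adj.
Definition smap (P Q : 'M[K]_n) (a : Vt) : Vt := (a.1 *m P, a.2 *m Q).

Lemma dot_map P Q u w : P *m Q^T = 1%:M -> dot (u *m P) (w *m Q) = dot u w.
Proof. by move=> H; rewrite /dot trmx_mul !mulmxA -(mulmxA u P) H mulmx1. Qed.

Lemma smap_aut P Q : P *m Q^T = 1%:M -> is_automorphism (smap P Q : Sym -> Sym).
Proof.
move=> H.
have H1 : Q^T *m P = 1%:M by apply: mulmx1C.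
have H2 : Q *m P^T = 1%:M by rewrite -[Q]trmxK -trmx_mul H trmx1.
have H3 : P^T *m Q = 1%:M by rewrite -[Q]trmxK -trmx_mul H1 trmx1.
have K1 : cancel (smap P Q) (smap Q^T P^T) by case=> a b; rewrite /smap /= -!mulmxA H H2 !mulmx1.
have K2 : cancel (smap Q^T P^T) (smap P Q) by case=> a b; rewrite /smap /= -!mulmxA H1 H3 !mulmx1.
split; last by exists (smap Q^T P^T).
split; first exact: can_inj K1.
by move=> s u /=; rewrite /adj /smap /= !dot_map.
Qed.

Definition rep (tau : 'M[K]_(d, d) * 'M[K]_(d, d) * 'M[K]_(d, d)) (i : 'I_d) : Vt :=
  (row i (row_mx tau.1.1 (row_mx tau.1.2 (0 : 'M[K]_(d, t)))),
   row i (row_mx tau.2 (0 : 'M[K]_(d, d + t)))).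

Lemma move_sym (x : 'I_d -> Vt) :
  exists tau P Q, P *m Q^T = 1%:M /\ forall i, x i = smap P Q (rep tau i).
Proof.
pose A : 'M[K]_(d, n) := \matrix_(i < d) (x i).1.
pose W : 'M[K]_(d, n) := \matrix_(i < d) (x i).2.
pose E1 := row_ebase W.
pose H1 := invmx E1. pose G1 := E1^T.
pose A' := A *m G1.
pose A1 := lsubmx A'. pose A2 := rsubmx A'.
pose E2 := row_ebase A2.
pose G2 : 'M[K]_n := block_mx 1%:M 0 0 (invmx E2).
pose H2 : 'M[K]_n := block_mx 1%:M 0 0 E2^T.
pose G := G1 *m G2. pose Hm := H1 *m H2.
have uE1 : E1 \in unitmx by apply: row_ebase_unit.
have uE2 : E2 \in unitmx by apply: row_ebase_unit.
have GH1 : G1 *m H1^T = 1%:M by rewrite /G1 /H1 -trmx_mul mulVmx // trmx1.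
have GH2 : G2 *m H2^T = 1%:M.
  rewrite /G2 /H2 tr_block_mx !trmx0 trmx1 trmxK mulmx_block.
  by rewrite ?mulmx0 ?mul0mx ?mulmx1 ?addr0 ?add0r mulVmx // -scalar_mx_block.
have GH : G *m Hm^T = 1%:M by rewrite /G /Hm trmx_mul !mulmxA -(mulmxA G1) GH2 mulmx1 GH1.
have AG : A *m G = row_mx A1 (row_mx (lsubmx (A2 *m invmx E2)) 0).
  rewrite /G mulmxA -/A' -[A']hsubmxK /G2 mul_row_block.
  by rewrite ?mulmx0 ?mul0mx ?mulmx1 ?addr0 ?add0r -ebase_shape.
have WH : W *m Hm = row_mx (lsubmx (W *m H1)) 0.
  rewrite /Hm mulmxA {1}/H1 ebase_shape /H2 mul_row_block.
  by rewrite ?mulmx0 ?mul0mx ?mulmx1 ?addr0 ?add0r ?row_mxKl.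
exists (A1, lsubmx (A2 *m invmx E2), lsubmx (W *m H1)), Hm^T, G^T; split.
  by rewrite trmxK; apply: mulmx1C.
have GH' : Hm *m G^T = 1%:M by rewrite -[Hm]trmxK -trmx_mul GH trmx1.
move=> i; rewrite /smap /rep /= -AG -WH -!row_mul -(mulmxA A) -(mulmxA W) GH GH' !mulmx1 !rowK.
by case: (x i).
Qed.
End Symp.
Close Scope ring_scope.
Open Scope ring_scope.

Lemma F2_add_self (x : 'F_2) : x + x = 0.
Proof. by case: x => [[|[|]]] //= Hx; apply: val_inj. Qed.

Lemma F2_10 : (1 : 'F_2) != 0. Proof. exact: oner_neq0. Qed.

Lemma natb_eq1 (b : bool) : ((b : nat)%:R : 'F_2) = 1 <-> b.
Proof. by case: b => //=; split => // H; move: F2_10; rewrite -H eqxx. Qed.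

Definition bitP (P : Prop) : 'F_2 := if excluded_middle_informative P then 1 else 0.
Lemma bitP1 P : bitP P = 1 <-> P.
Proof.
by rewrite /bitP; case: excluded_middle_informative => // nP; split => // H.
Qed.

Section Univ.
Variables (d : nat) (V : Type) (E : V -> V -> Prop).
Hypothesis symE : forall x y, E x y -> E y x.
Hypothesis irrE : forall x, ~ E x x.
Variables (C : V -> Prop) (s : list V).
Hypothesis Hs : forall x, C x -> In x s.
Local Notation t := (length s).
Local Notation n := (d + (d + t))%N.
Definition GC := induced (graph_structure E) C.

Definition idx (c : GC) : nat :=
  proj1_sig (constructive_indefinite_description _ (In_nth_error _ _ (Hs (proj2_sig c)))).
Lemma idxE c : nth_error s (idx c) = Some (proj1_sig c).
Proof. by rewrite /idx; case: constructive_indefinite_description. Qed.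
Lemma idx_lt c : (idx c < n)%N.
Proof.
have : (idx c < t)%N by apply/ltP; apply/nth_error_Some; rewrite idxE.
by move/leq_trans; apply; rewrite addnA leq_addl.
Qed.

Definition ev (j : nat) : 'rV['F_2]_n := \row_(k < n) ((k == j :> nat) : nat)%:R.
Definition aa (i k : nat) : Prop := exists u v, nth_error s i = Some u /\ nth_error s k = Some v /\ E u v.
Definition wv (i : nat) : 'rV['F_2]_n := \row_(k < n) (((k < i)%N : nat)%:R * bitP (aa i k)).

Lemma dot_ev j (w : 'rV['F_2]_n) (jn : (j < n)%N) : dot (ev j) w = w 0 (Ordinal jn).
Proof.
rewrite /dot !mxE (bigD1 (Ordinal jn)) //= big1 ?addr0.
  by rewrite !mxE eqxx mul1r.
move=> k Hk; rewrite !mxE; case: eqP => [Hk'|_]; last by rewrite mul0r.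
by move/eqP: Hk; case; apply: val_inj.
Qed.

Definition emb (c : GC) : Vt d t := (ev (idx c), wv (idx c)).

Lemma emb_embedding : is_embedding (A := GC) (B := Sym d t) emb.
Proof.
have key : forall c c', idx c = idx c' -> c = c'.
  move=> c c' E1; apply: sig_eq; have := idxE c; rewrite E1 idxE; by case.
split.
  move=> c c' /(congr1 fst) /= Ee; apply: key.
  have := congr1 (fun w : 'rV_n => w 0 (Ordinal (idx_lt c))) Ee; rewrite !mxE eqxx /=.
  by case: eqP => // _ /eqP; rewrite eq_sym oner_eq0.
move=> sy u /=; rewrite /adj /emb /= (dot_ev _ (idx_lt _)) (dot_ev _ (idx_lt _)) !mxE /=.
set c := u ord0; set c' := u ord_max.
have aE : forall c1 c2 : GC, aa (idx c1) (idx c2) <-> E (proj1_sig c1) (proj1_sig c2).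
  move=> c1 c2; rewrite /aa idxE idxE; split => [[p [q [[<-] [[<-] H]]]]|H] //.
  by exists (proj1_sig c1), (proj1_sig c2).
case: (ltngtP (idx c) (idx c')) => Hl /=; rewrite ?mul1r ?mul0r ?addr0 ?add0r.
- rewrite bitP1 aE; split; exact: symE.
- by rewrite bitP1 aE.
- rewrite (key _ _ Hl); split => // H; first by case: (irrE H).
Qed.
End Univ.
Close Scope ring_scope.
Open Scope ring_scope.

Theorem part4 (V : Type) (E : V -> V -> Prop) :
  is_rado_graph E -> has_oligomorphic_approximation (graph_structure E).
Proof.
move=> [symE [irrE [_ [homE univE]]]] d _.
have rado_emb : forall t, exists f : Vt d t -> V,
    is_embedding (A := Sym d t) (B := graph_structure E) f.
  move=> t.
  pose e := fun i j : 'I_#|{: Vt d t}| => adj (enum_val i) (enum_val j).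
  have se : forall i j, e i j -> e j i by move=> i j; rewrite /e /adj addrC.
  have ie : forall i, ~ e i i.
    by move=> i; rewrite /e /adj F2_add_self => /esym /eqP; rewrite oner_eq0.
  have [f0 [f0i f0r]] := univE _ e se ie.
  exists (fun a => f0 (enum_rank a)); split.
    by move=> a b /f0i /enum_rank_inj.
  move=> sy u /=; have := f0r sy (fun k => enum_rank (u k)).
  by rewrite /= /e !enum_rankK.
exists (fun Bs => exists t (f : Vt d t -> V),
   is_embedding (A := Sym d t) (B := graph_structure E) f /\ Bs = @Img graph_sig (Sym d t) (graph_structure E) f); split; [|split].
- move=> Bs [t [f [_ ->]]]; exists (seq.map f (enum (Vt d t))) => v [a ->].
  by apply: In_seqmap; apply/InP; rewrite mem_enum.
- move=> C [s Hs].
  have [f femb] := rado_emb (length s).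
  pose F := fun c : GC E C => f (@emb d V E C s Hs c).
  have Femb : is_embedding (A := GC E C) (B := graph_structure E) F.
    exact: emb_comp (emb_embedding d symE irrE Hs) femb.
  pose Q := fun v => exists c, v = F c.
  have finQ : finite_subset Q.
    exists (seq.map f (enum (Vt d (length s)))) => v [c ->].
    by apply: In_seqmap; apply/InP; rewrite mem_enum.
  pose phi (c : GC E C) : induced (graph_structure E) Q := exist Q (F c) (ex_intro _ c erefl).
  pose psi (q : induced (graph_structure E) Q) : GC E C :=
    proj1_sig (constructive_indefinite_description _ (proj2_sig q)).
  have psiE : forall q, proj1_sig q = F (psi q).
    by move=> q; rewrite /psi; case: constructive_indefinite_description.
  have [Fi Fr] := Femb.
  have K1 : cancel phi psi by move=> c; apply: Fi; rewrite -psiE.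
  have K2 : cancel psi phi by move=> q; apply: sig_eq; rewrite /= -psiE.
  have isophi : is_isomorphism (A := GC E C) (B := induced (graph_structure E) Q) phi.
    split; last by exists psi.
    split; first exact: can_inj K1.
    move=> sy u; exact: (Fr sy u).
  have [g [Hg Hgphi]] := homE C Q (ex_intro _ s Hs) finQ phi isophi.
  have [[gi gr] [h Kg1 Kg2]] := Hg.
  have Hh := aut_inv Hg Kg1 Kg2.
  exists (@Img graph_sig (Sym d (length s)) (graph_structure E) (fun a => h (f a))); split.
    exists (length s), (fun a => h (f a)); split => //.
    exact: emb_comp femb (proj1 Hh).
  move=> v Cv; exists (emb d Hs (exist C v Cv)).
  have E1 := Hgphi (exist C v Cv); simpl in E1.
  by rewrite -{1}(Kg1 v) E1.
- exists #|{: 'M['F_2]_(d, d) * 'M['F_2]_(d, d) * 'M['F_2]_(d, d)}| => Bs [t [f [femb ->]]].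
  apply: (orbits_move (rep := fun tau i => @inimg graph_sig (Sym d t) (graph_structure E) f (@rep d t tau i))) => x.
  have [tau [P [Q [PQ Hx]]]] := move_sym (fun i => pre (x i)).
  exists tau, (@tr graph_sig (Sym d t) (graph_structure E) f (smap P Q)); split; first exact: (@tr_aut graph_sig (Sym d t) (graph_structure E) f femb (smap P Q) (smap_aut PQ)).
  move=> i; apply: sig_eq; rewrite (trE femb (smap P Q) (b := @inimg graph_sig (Sym d t) (graph_structure E) f (@rep d t tau i)) (a := @rep d t tau i)) //.
  by rewrite -Hx -preE.
Qed.
Close Scope ring_scope.

Theorem mainTheorem2 :
  (* (i) *)
  (forall (L : signature) (A : structure L),
     countable A -> homogeneous A -> oligomorphic A ->
     (exists Bfam : (A -> Prop) -> Prop,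
        (forall B, Bfam B -> finite_subset B) /\
        (forall C, finite_subset C -> exists B, Bfam B /\ included C B) /\
        (forall B, Bfam B -> homogeneous (induced A B))) ->
     has_oligomorphic_approximation A) /\
  (* (ii) *)
  has_oligomorphic_approximation equality_atoms /\
  (* (iii) *)
  (forall F : finFieldType, has_oligomorphic_approximation (vector_atoms F)) /\
  (* (iv) *)
  (forall (V : Type) (E : V -> V -> Prop),
     is_rado_graph E -> has_oligomorphic_approximation (graph_structure E)).
Proof.
split; first exact: part1.
split; first exact: part2.
split; first exact: part3.
exact: part4.
Qed.
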